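(* Let $(\Omega,\mathcal{F},P)$ be an essentially purely $P$-atomic probability space and $(E,\mathcal P)$ a random locally convex module over $K$ with base $(\Omega,\mathcal F,P)$, and let $f:E\to L^0(\mathcal F,K)$ be a module homomorphism. Then $f\in E^\ast_{min}$ (i.e. $f$ is continuous from $(E,\mathcal T_{\varepsilon,\lambda})$ to $(L^0(\mathcal F,K),\mathcal T_c)$) if and only if there exist finitely many $P$-atoms $A_1,\dots,A_n$, elements $\xi_1,\dots,\xi_n\in L^0_+$ and $\mathcal Q_1,\dots,\mathcal Q_n\in\mathcal F(\mathcal P)$ such that $$|f(x)|\le\sum_{i=1}^{n}\tilde I_{A_i}\,\xi_i\,\|x\|_{\mathcal Q_i}\quad\text{for all }x\in E.$$
   Context: $(\Omega,\mathcal{F},P)$ is a probability space, $K=\mathbb{R}$ or $\mathbb{C}$, $L^{0}(\mathcal{F},K)$ is the algebra of equivalence classes (mod a.s. equality) of $K$-valued measurable random variables, ordered a.s.; $L^0_+$ the nonnegative ones, $L^0_{++}$ those $>0$ a.s.; $\tilde I_A$ is the class of the indicator of $A$. An $L^0$-seminorm on a left $L^0(\mathcal F,K)$-module $E$ is $\|\cdot\|:E\to L^0_+$ with $\|x+y\|\le\|x\|+\|y\|$ and $\|\xi x\|=|\xi|\|x\|$. A random locally convex module $(E,\mathcal P)$ is a left $L^0(\mathcal F,K)$-module with a family $\mathcal P$ of $L^0$-seminorms such that $\bigvee_{\|\cdot\|\in\mathcal P}\|x\|=0$ implies $x=0$. $\mathcal F(\mathcal P)$ is the set of finite subfamilies of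 $\mathcal P$, and $\|x\|_{\mathcal Q}=\bigvee_{\|\cdot\|\in\mathcal Q}\|x\|$. $\mathcal T_{\varepsilon,\lambda}$ on $E$ has local base at $0$ the sets $\{x:P\{\omega:\|x\|_{\mathcal Q}(\omega)<\varepsilon\}>1-\lambda\}$ ($\mathcal Q\in\mathcal F(\mathcal P)$, $\varepsilon>0$, $0<\lambda<1$). $\mathcal T_c$ on $E$: $G$ open iff for each $x\in G$ there are $\mathcal Q\in\mathcal F(\mathcal P)$, $\varepsilon\in L^0_{++}$ with $x+\{y:\|y\|_{\mathcal Q}\le\varepsilon\}\subset G$. $L^0(\mathcal F,K)$ is regarded as a random locally convex module with $\mathcal P=\{|\cdot|\}$. A $P$-atom is $A\in\mathcal F$ with $P(A)>0$ such that every measurable $B\subset A$ has $P(B)=0$ or $P(A\setminus B)=0$. $(\Omega,\mathcal F,P)$ is essentially purely $P$-atomic if there is an at most countable family $\{A_n\}$ of disjoint atoms with $\Omega=\bigcup_n A_n$ such that every $A\in\mathcal F$ differs by a null set from some set in the $\sigma$-algebra generated by $\{A_n\}$. *)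

(* Defs.v *)
From HB Require Import structures.
From mathcomp Require Import all_boot all_order all_algebra.
From mathcomp Require Import all_classical all_reals all_analysis.
From mathcomp Require Import complex.

Set Implicit Arguments.
Unset Strict Implicit.
Unset Printing Implicit Defensive.

Import Order.TTheory GRing.Theory Num.Theory.
Local Open Scope classical_set_scope.
Local Open Scope ring_scope.

Section ProbSpace.
Context (d : measure_display) (T : measurableType d) (R : realType)
        (P : probability T R).

Definition P_atom (A : set T) : Prop :=
  measurable A /\ (0 < P A)%E /\
  forall B, measurable B -> B `<=` A -> P B = 0%E \/ P (A `\` B) = 0%E.

(* Essentially purely P-atomic: an at most countable family of pairwise
   disjoint atoms (indexed by S : set nat) covering Omega, such that every
   measurable set differs by a null set from a set of the sigma-algebra
   generated by the family. *)
Definition essentially_purely_atomic : Prop :=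
  exists (S : set nat) (A : nat -> set T),
    (forall n, S n -> P_atom (A n)) /\
    (forall n m, S n -> S m -> n <> m -> A n `&` A m = set0) /\
    \bigcup_(n in S) A n = setT /\
    forall B, measurable B ->
      exists C, (<<s [set A n | n in S] >>) C /\
                P ((B `\` C) `|` (C `\` B)) = 0%E.

Definition ae_eq (V : Type) (f g : T -> V) : Prop :=
  {ae P, forall w, f w = g w}.

Definition ae_le (f g : T -> R) : Prop := {ae P, forall w, f w <= g w}.

(*  The scalar field K comes with its modulus [kabs : K -> R] and the       *)
(*  notion [kmeas] of (Borel) measurability of K-valued functions.  An      *)
(*  element of L^0(F,K) is represented by a kmeas-measurable function       *)
(*  T -> K, equality in L^0 being a.s. equality.                            *)
Section RLCM.
Context (K : comNzRingType) (kabs : K -> R) (kmeas : (T -> K) -> Prop).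

(* A left L^0(F,K)-module structure on the additive group E: the action
   [scale] of (representatives of) L^0 elements, which only depends on the
   a.s. class of the scalar. *)
Record L0_module (E : zmodType) := L0Module {
  scale : (T -> K) -> E -> E;
  scale_ae : forall xi eta x, kmeas xi -> kmeas eta -> ae_eq xi eta ->
     scale xi x = scale eta x;
  scale1 : forall x, scale (fun _ => 1) x = x;
  scaleDr : forall xi x y, kmeas xi -> scale xi (x + y) = scale xi x + scale xi y;
  scaleDl : forall xi eta x, kmeas xi -> kmeas eta ->
     scale (xi \+ eta) x = scale xi x + scale eta x;
  scaleA : forall xi eta x, kmeas xi -> kmeas eta ->
     scale (xi \* eta) x = scale xi (scale eta x)
}.

(* An L^0-seminorm E -> L^0_+(F) (values are represented by measurable
   real functions, nonnegative a.s.). *)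
Definition L0_seminorm (E : zmodType) (M : L0_module E) (nrm : E -> T -> R)
  : Prop :=
  (forall x, measurable_fun setT (nrm x)) /\
  (forall x, ae_le (fun _ => 0) (nrm x)) /\
  (forall x y, ae_le (nrm (x + y)) (nrm x \+ nrm y)) /\
  (forall xi x, kmeas xi ->
     ae_eq (nrm (scale M xi x)) (fun w => kabs (xi w) * nrm x w)).

(* A random locally convex module (E, calP): the family calP of
   L^0-seminorms is indexed by the type I. *)
Record RLC_module (E : zmodType) := RLCModule {
  rlc_mod : L0_module E;
  rlc_idx : Type;
  rlc_nrm : rlc_idx -> E -> T -> R;
  rlc_seminorm : forall i, L0_seminorm rlc_mod (rlc_nrm i);
  rlc_sep : forall x, (forall i, ae_eq (rlc_nrm i x) (fun _ => 0)) -> x = 0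
}.

(* ||x||_Q for a finite subfamily Q of calP (a finite list of indices):
   the pointwise maximum (the empty family gives 0; since seminorms are
   a.s. nonnegative this is a representative of the L^0 supremum). *)
Definition nrmQ (E : zmodType) (M : RLC_module E) (Q : seq (rlc_idx M))
  (x : E) : T -> R :=
  fun w => \big[Num.max/0]_(i <- Q) rlc_nrm i x w.

Definition Teps_open (E : zmodType) (M : RLC_module E) (G : set E) : Prop :=
  forall x, G x -> exists (Q : seq (rlc_idx M)) (eps lam : R),
    0 < eps /\ 0 < lam < 1 /\
    forall y, ((1 - lam)%:E < P [set w | (nrmQ Q y w < eps)%R])%E -> G (x + y).

(* Open sets of the locally L^0-convex topology T_c on L^0(F,K), where
   L^0(F,K) carries the single L^0-seminorm |.|.  A set of L^0 elements is
   given by a predicate on representatives. *)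
Definition Tc_open (G : set (T -> K)) : Prop :=
  forall x, kmeas x -> G x -> exists eps : T -> R,
    measurable_fun setT eps /\ {ae P, forall w, 0 < eps w} /\
    forall y, kmeas y -> ae_le (fun w => kabs (y w)) eps -> G (x \+ y).

Definition L0_module_hom (E : zmodType) (M : L0_module E) (f : E -> T -> K)
  : Prop :=
  (forall x, kmeas (f x)) /\
  (forall x y, ae_eq (f (x + y)) (f x \+ f y)) /\
  (forall xi x, kmeas xi -> ae_eq (f (scale M xi x)) (xi \* f x)).

Definition in_dual_min (E : zmodType) (M : RLC_module E) (f : E -> T -> K)
  : Prop :=
  forall G, Tc_open G -> Teps_open M [set x | G (f x)].

Definition lemma3p7_stmt : Prop :=
  essentially_purely_atomic ->
  forall (E : zmodType) (M : RLC_module E) (f : E -> T -> K),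
    L0_module_hom (rlc_mod M) f ->
    (in_dual_min M f <->
     exists (n : nat) (A : 'I_n -> set T) (xi : 'I_n -> T -> R)
            (Q : 'I_n -> seq (rlc_idx M)),
       (forall i, P_atom (A i)) /\
       (forall i, measurable_fun setT (xi i) /\ ae_le (fun _ => 0) (xi i)) /\
       forall x, ae_le (fun w => kabs (f x w))
         (fun w => \sum_(i < n) \1_(A i) w * xi i w * nrmQ (Q i) x w)).

End RLCM.
End ProbSpace.

Definition Rabs_K (R : realType) (z : R) : R := `|z|.
Definition Rmeas_K d (T : measurableType d) (R : realType) (f : T -> R) : Prop :=
  measurable_fun setT f.

Definition Cabs_K (R : realType) (z : R[i]) : R :=
  Num.sqrt (complex.Re z ^+ 2 + complex.Im z ^+ 2).
(* Borel measurability of a C-valued function (C = R^2): real and imaginary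
   parts measurable. *)
Definition Cmeas_K d (T : measurableType d) (R : realType) (f : T -> R[i])
  : Prop :=
  measurable_fun setT (fun w => complex.Re (f w)) /\
  measurable_fun setT (fun w => complex.Im (f w)).

(* Main.v *)
Require Import Defs.
From HB Require Import structures.
From mathcomp Require Import all_boot all_order all_algebra.
From mathcomp Require Import all_classical all_reals all_analysis.
From mathcomp Require Import complex.
From mathcomp Require Import measurable_realfun.
From mathcomp Require Import ring lra.
Import Order.TTheory GRing.Theory Num.Theory.
Local Open Scope classical_set_scope.
Local Open Scope ring_scope.
Section Basics.
Context (d : measure_display) (T : measurableType d) (R : realType) (P : probability T R).

Lemma ae_subset_le (A B : set T) : measurable A -> measurable B ->
  {ae P, forall w, A w -> B w} -> (P A <= P B)%E.
Proof.
move=> mA mB [N [mN PN0 sN]].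
apply: (@le_trans _ _ (P (B `|` N))).
  apply: le_measure; rewrite ?inE; [exact: mA| exact: measurableU| ].
  move=> w Aw; have [Bw|nBw] := pselect (B w); [by left|right; apply: sN => /=].
  by move=> /(_ Aw).
apply: le_trans (measureU2 _ _ _) _ => //.
rewrite [X in (_ + X <= _)%E](_ : _ = 0%E) ?adde0 //.

Qed.

Lemma null_ae (A : set T) : measurable A -> P A = 0%E -> {ae P, forall w, ~ A w}.
Proof.
move=> mA PA; exists A; split => // w /= nnA.
by case: (pselect (A w)) => // nA; exfalso; exact: nnA.
Qed.

Lemma atom_seq (A : set T) (B : nat -> set T) : P_atom P A ->
  (forall k, measurable (B k)) ->
  {ae P, forall w, A w -> exists k, B k w} ->
  exists k, {ae P, forall w, A w -> B k w}.
Proof.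
move=> [mA [PA0 hA]] mB hae.
apply: contrapT => hn.
have h0 k : P (A `&` B k) = 0%E.
  have mAB : measurable (A `&` B k) by exact: measurableI.
  case: (hA _ mAB (@subIsetl _ _ _)) => // h; exfalso; apply: hn; exists k.
  exists (A `\` (A `&` B k)); split => //; first exact: measurableD.
  move=> w /= hw; split; first by apply: contrapT => nA; apply: hw => /nA.
  by case=> _ Bw; apply: hw.
have h1 : {ae P, forall w, forall k, ~ (A `&` B k) w}.
  apply: ae_foralln => k; apply: null_ae => //; exact: measurableI.
have h2 : {ae P, forall w, A w -> set0 w}.
  apply: filterS2 hae h1 => w h h' Aw.
  by case: (h Aw) => k Bk; apply: (h' k).
have := @ae_subset_le A set0 mA measurable0 h2.
by rewrite measure0 leNgt PA0.
Qed.

Lemma meas_lt (f g : T -> R) : measurable_fun setT f -> measurable_fun setT g ->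
  measurable [set w | f w < g w].
Proof.
move=> mf mg; have mt : measurable [set true] by [].
have := measurable_fun_ltr mf mg measurableT mt.
by rewrite setTI.
Qed.

Lemma meas_le (f g : T -> R) : measurable_fun setT f -> measurable_fun setT g ->
  measurable [set w | f w <= g w].
Proof.
move=> mf mg; have mt : measurable [set true] by [].
have := measurable_fun_ler mf mg measurableT mt.
by rewrite setTI.
Qed.

Lemma atom_lower (A : set T) (h : T -> R) : P_atom P A -> measurable_fun setT h ->
  {ae P, forall w, 0 < h w} -> exists c : R, 0 < c /\ {ae P, forall w, A w -> c <= h w}.
Proof.
move=> hA mh hpos.
have := @atom_seq A (fun k => [set w | 1 < h w * k.+1%:R]) hA.
case.
- move=> k; apply: meas_lt; first exact: measurable_cst.
  by apply: measurable_funM => //; exact: measurable_cst.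
- apply: filterS hpos => w hw _; exists (Num.trunc (h w)^-1).
  have := truncnS_gt (h w)^-1; set m := _.+1%:R => hm.
  rewrite /= -(divff (lt0r_neq0 hw)) ltr_pM2l //.
- move=> k hk; exists (k.+1%:R)^-1; split; first by rewrite invr_gt0 ltr0Sn.
  apply: filterS hk => w hw Aw; have := hw Aw => /= h1.
  rewrite -(mul1r (_^-1)) ler_pdivrMr ?ltr0Sn //; exact: ltW.
Qed.

Lemma atom_upper (A : set T) (h : T -> R) : P_atom P A -> measurable_fun setT h ->
  exists c : R, 0 <= c /\ {ae P, forall w, A w -> h w <= c}.
Proof.
move=> hA mh.
have := @atom_seq A (fun k => [set w | h w <= k%:R]) hA.
case.
- by move=> k; apply: meas_le => //; exact: measurable_cst.
- apply: aeW => w _; exists (Num.trunc `|h w|).+1.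
  exact: le_trans (ler_norm _) (ltW (truncnS_gt _)).
- by move=> k hk; exists k%:R; split.
Qed.

Lemma Pfin (S : set T) : measurable S -> exists s : R, P S = s%:E /\ 0 <= s <= 1.
Proof.
move=> mS; have h0 : (0 <= P S)%E := measure_ge0 P S.
have h1 : (P S <= 1)%E := probability_le1 P mS.
move: h0 h1; case: (P S) => [s| |] //= h0 h1; exists s; split => //.
by rewrite -!lee_fin h0 h1.
Qed.

Lemma atom_full (A S : set T) (lam : R) : P_atom P A -> measurable S ->
  ((1 - lam)%:E < P S)%E -> (lam%:E <= P A)%E -> {ae P, forall w, A w -> S w}.
Proof.
move=> [mA [PA0 hA]] mS hS hlam.
have mAS := measurableI _ _ mA mS.
case: (hA _ mAS (@subIsetl _ _ _)) => h.
- exfalso.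
  have h2 : (P A <= P (A `&` S) + P (~` S))%E.
    apply: le_trans (measureU2 _ _ _) => //; last exact: measurableC.
    apply: le_measure; rewrite ?inE //; first by apply: measurableU => //; exact: measurableC.
    move=> w Aw; case: (pselect (S w)) => Sw; [by left|by right].
  move: h2; rewrite probability_setC // [X in (X + _)%E](_ : _ = 0%E) // add0e.
  have [s [Se _]] := Pfin _ mS; have [a [Ae _]] := Pfin _ mA.
  rewrite Se Ae -EFinB lee_fin => h3.
  move: hlam hS; rewrite Ae Se !lte_fin !lee_fin => h4 h5.
  move: h3 h4 h5; clear; move=> h3 h4 h5; lra.
- exists (A `\` (A `&` S)); split => //; first exact: measurableD.
  move=> w /= hw; split; first by apply: contrapT => nA; apply: hw => /nA.
  by case=> _ Sw; apply: hw.
Qed.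

Lemma atom_pos (A : set T) : P_atom P A -> exists a : R, P A = a%:E /\ 0 < a /\ a <= 1.
Proof.
move=> [mA [PA _]]; have [s [Ps /andP[_ hs]]] := Pfin _ mA.
by exists s; move: PA; rewrite Ps lte_fin.
Qed.

Lemma ae_and (p q : T -> Prop) : {ae P, forall w, p w} -> {ae P, forall w, q w} ->
  {ae P, forall w, p w /\ q w}.
Proof.
move=> h1 h2; near=> w; split; [exact: (near h1 w)|exact: (near h2 w)].
Unshelve. all: by end_near. Qed.

Lemma union_large (S : set nat) (A : nat -> set T) (lam : R) :
  (forall n, S n -> measurable (A n)) -> \bigcup_(n in S) A n = setT -> 0 < lam ->
  exists N, ((1 - lam)%:E < P (\bigcup_(k in [set k | S k /\ (k < N)%N]) A k))%E.
Proof.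
move=> mA hcov lam0.
pose U N := \bigcup_(k in [set k | S k /\ (k < N)%N]) A k.
have mU N : measurable (U N) by apply: bigcup_measurable => k [Sk _]; exact: mA.
have ndS n m : (n <= m)%N -> U n `<=` U m.
  by move=> nm w [k [Sk kn] Ak]; exists k => //; split => //; exact: leq_trans kn nm.
have nd : {homo U : n m / (n <= m)%N >-> (n <= m)%O}.
  by move=> n m nm; apply/subsetPset; exact: ndS.
have hbig : \bigcup_n U n = setT.
  apply/seteqP; split => // w _.
  have : (\bigcup_(n in S) A n) w by rewrite hcov.
  by case=> k Sk Ak; exists k.+1 => //; exists k.
have mbig : measurable (\bigcup_n U n) by rewrite hbig.
have c1 := @nondecreasing_cvg_mu _ _ _ P U mU mbig nd.
have nd2 : {homo (P \o U) : n m / (n <= m)%N >-> (n <= m)%E}.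
  by move=> n m nm; apply: le_measure; rewrite ?inE //; exact: ndS.
have c2 := ereal_nondecreasing_cvgn nd2.
have e := cvg_unique (@ereal_hausdorff R) c1 c2.
have h0 : ((1 - lam)%:E < P [set: T])%E by rewrite probability_setT lte_fin; lra.
have : ((1 - lam)%:E < ereal_sup (range (P \o U)))%E by rewrite -e hbig; exact: h0.
by move/ereal_sup_gt => [_ [N _ <-] hN]; exists N.
Qed.
End Basics.
Arguments ae_and {d T R P p q}.

Lemma meas_inv (R : realType) : measurable_fun setT (@GRing.inv R).
Proof.
have -> : (@GRing.inv R) = (fun x => if x == 0 then 0 else x^-1).
  by apply/funext => x; case: eqP => // ->; rewrite invr0.
apply: measurable_fun_if => //.
- by apply: measurable_fun_eqr.
- have -> : [set: R] `&` (fun x : R => x == 0) @^-1` [set false] = [set x | x != 0].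
    by apply/seteqP; split => x /=; [case=> _ ->|move=> /negbTE ->].
  apply: open_continuous_measurable_fun; first exact: open_neq.
  by move=> x; rewrite inE => /inv_continuous.
Qed.

Section Generic.
Context (d : measure_display) (T : measurableType d) (R : realType) (P : probability T R).
Context (K : comNzRingType) (kabs : K -> R) (kmeas : (T -> K) -> Prop) (ofR : R -> K).
Hypothesis kabsD : forall a b, kabs (a + b) <= kabs a + kabs b.
Hypothesis kabsN : forall a, kabs (- a) = kabs a.
Hypothesis kabsM : forall r a, kabs (ofR r * a) = `|r| * kabs a.
Hypothesis kabs0 : kabs 0 = 0.
Hypothesis kabs1 : kabs 1 = 1.
Hypothesis kabs_ge0 : forall a, 0 <= kabs a.
Hypothesis kmeasB : forall f g, kmeas f -> kmeas g -> kmeas (fun w => f w - g w).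
Hypothesis kmeasR : forall g, measurable_fun setT g -> kmeas (fun w => ofR (g w)).
Hypothesis kmeas_abs : forall h, kmeas h -> measurable_fun setT (fun w => kabs (h w)).

Lemma kabsR r : kabs (ofR r) = `|r|.
Proof. by rewrite -[ofR r]mulr1 kabsM kabs1 mulr1. Qed.

Lemma ae_forall_ord n (p : 'I_n -> T -> Prop) :
  (forall i, {ae P, forall w, p i w}) -> {ae P, forall w, forall i, p i w}.
Proof.
move=> h.
have : {ae P, forall w, forall k, forall hk : (k < n)%N, p (Ordinal hk) w}.
  apply: ae_foralln => k; case: (pselect (k < n)%N) => hk.
    apply: filterS (h (Ordinal hk)) => w pw hk'.
    by rewrite (bool_irrelevance hk' hk).
  by apply: aeW => w hk'; exfalso; exact: hk.
by apply: filterS => w hw [i hi]; exact: hw.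
Qed.

Lemma fin_upper n (c : 'I_n -> R) : exists K, 0 <= K /\ forall i, c i <= K.
Proof.
exists (\sum_i `|c i|); split; first by apply: sumr_ge0.
move=> i; rewrite (bigD1 i) //=; apply: le_trans (ler_norm _) _.
by rewrite lerDl sumr_ge0.
Qed.

Lemma fin_lower n (c : 'I_n -> R) : (forall i, 0 < c i) ->
  exists m, 0 < m /\ forall i, m <= c i.
Proof.
move=> hc; have [B [B0 hB]] := @fin_upper n (fun i => (c i)^-1).
have B1 : 0 < B + 1 by lra.
exists (B + 1)^-1; split; first by rewrite invr_gt0.
move=> i; rewrite -[c i]invrK lef_pV2 ?posrE ?invr_gt0 //.
by apply: le_trans (hB i) _; rewrite lerDl.
Qed.

Lemma hom_scale E (Mo : L0_module P kmeas E) f x g :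
  L0_module_hom Mo f -> measurable_fun setT g ->
  {ae P, forall w, kabs (f (scale Mo (fun w => ofR (g w)) x) w) = `|g w| * kabs (f x w)}.
Proof.
move=> [_ [_ h]] mg; apply: filterS (h _ x (kmeasR _ mg)) => w /= ->.
by rewrite kabsM.
Qed.

Lemma hom_add E (Mo : L0_module P kmeas E) f x y :
  L0_module_hom Mo f -> {ae P, forall w, f (x + y) w = f x w + f y w}.
Proof. by move=> [_ [h _]]; exact: h. Qed.

Lemma hom0 E (Mo : L0_module P kmeas E) f :
  L0_module_hom Mo f -> {ae P, forall w, f 0 w = 0}.
Proof.
move=> hf; apply: filterS (@hom_add _ _ f 0 0 hf) => w; rewrite addr0.
by move=> h; apply: (addrI (f 0 w)); rewrite addr0 -h.
Qed.

Section Mod.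
Context (E : zmodType) (M : RLC_module P kabs kmeas E).

Lemma nrmQ_ge0 (Q : seq (rlc_idx M)) x w : 0 <= nrmQ Q x w.
Proof.
rewrite /nrmQ; elim: Q => [|i Q IH]; first by rewrite big_nil.
by rewrite big_cons le_max IH orbT.
Qed.

Lemma nrmQ_meas (Q : seq (rlc_idx M)) x : measurable_fun setT (nrmQ Q x).
Proof.
rewrite /nrmQ; elim: Q => [|i Q IH].
  under eq_fun do rewrite big_nil; exact: measurable_cst.
under eq_fun do rewrite big_cons.
apply: measurable_maxr => //; have [h _] := rlc_seminorm i; exact: h.
Qed.

Lemma nrm_le_nrmQ (Q : seq (rlc_idx M)) i x w : List.In i Q -> rlc_nrm i x w <= nrmQ Q x w.
Proof.
rewrite /nrmQ; elim: Q => [//|j Q IH] /= [->|h]; rewrite big_cons le_max.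
  by rewrite lexx.
by rewrite IH ?orbT.
Qed.

Lemma nrmQ_le_in (Q1 Q2 : seq (rlc_idx M)) x w : (forall i, List.In i Q1 -> List.In i Q2) ->
  nrmQ Q1 x w <= nrmQ Q2 x w.
Proof.
rewrite {1}/nrmQ; elim: Q1 => [|j Q IH] h; first by rewrite big_nil nrmQ_ge0.
rewrite big_cons ge_max nrm_le_nrmQ /=; last by apply: h; left.
by rewrite IH // => i hi; apply: h; right.
Qed.

Lemma nrmQ_scale (Q : seq (rlc_idx M)) x g : measurable_fun setT g ->
  {ae P, forall w, nrmQ Q (scale (rlc_mod M) (fun w => ofR (g w)) x) w
                   = `|g w| * nrmQ Q x w}.
Proof.
move=> mg; rewrite /nrmQ; elim: Q => [|i Q IH].
  by apply: aeW => w; rewrite !big_nil mulr0.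
have [_ [_ [_ hsc]]] := rlc_seminorm i.
have hi := hsc _ x (kmeasR _ mg).
apply: filterS2 IH hi => w h1 h2; rewrite !big_cons h1 h2 kabsR.
by rewrite maxr_pMr.
Qed.


Lemma In_catl (X : Type) (a : X) s1 s2 : List.In a s1 -> List.In a (s1 ++ s2).
Proof. by elim: s1 => //= b s1 IH [->|h]; [left|right; apply: IH]. Qed.

Lemma In_catr (X : Type) (a : X) s1 s2 : List.In a s2 -> List.In a (s1 ++ s2).
Proof. by elim: s1 => //= b s1 IH h; right; exact: IH. Qed.

Lemma In_foldr n (Q : 'I_n -> seq (rlc_idx M)) (s : seq 'I_n) i j :
  i \in s -> List.In j (Q i) ->
  List.In j (foldr (fun i acc => Q i ++ acc) [::] s).
Proof.
elim: s => [//|a s IH]; rewrite inE => /orP [/eqP ->|/IH h] hj /=.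
  exact: In_catl.
by apply: In_catr; exact: h.
Qed.

Lemma bound_cont (f : E -> T -> K) : L0_module_hom (rlc_mod M) f ->
  (exists (n : nat) (A : 'I_n -> set T) (xi : 'I_n -> T -> R)
          (Q : 'I_n -> seq (rlc_idx M)),
       (forall i, P_atom P (A i)) /\
       (forall i, measurable_fun setT (xi i) /\ ae_le P (fun _ => 0) (xi i)) /\
       forall x, ae_le P (fun w => kabs (f x w))
         (fun w => \sum_(i < n) \1_(A i) w * xi i w * nrmQ (Q i) x w)) ->
  in_dual_min M f.
Proof.
move=> hf [n [A [xi [Q [hA [hxi hb]]]]]] G hG x Gfx.
have [kmf _] := hf.
have [eps0 [meps0 [eps0pos hGy]]] := hG _ (kmf x) Gfx.
have [c hc] := @choice _ _ (fun i (c : R) => 0 < c /\ {ae P, forall w, A i w -> c <= eps0 w})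
  (fun i => @atom_lower _ _ _ P (A i) eps0 (hA i) meps0 eps0pos).
have [k hk] := @choice _ _ (fun i (c : R) => 0 <= c /\ {ae P, forall w, A i w -> xi i w <= c})
  (fun i => @atom_upper _ _ _ P (A i) (xi i) (hA i) (hxi i).1).
have [a ha] := @choice _ _ (fun i (c : R) => P (A i) = c%:E /\ 0 < c /\ c <= 1)
  (fun i => @atom_pos _ _ _ P (A i) (hA i)).
have [m [m0 hm]] := @fin_lower n c (fun i => (hc i).1).
have [ma [ma0 hma]] := @fin_lower n a (fun i => (ha i).2.1).
have [Kb [Kb0 hKb]] := @fin_upper n k.
pose Q' := foldr (fun i acc => Q i ++ acc) [::] (enum 'I_n).
have hQ' i j : List.In j (Q i) -> List.In j Q' by apply: In_foldr; rewrite mem_enum.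
have nK0 : 0 < n%:R * Kb + 1 by have := mulr_ge0 (ler0n _ n) Kb0; lra.
pose eps := m / (n%:R * Kb + 1).
have eps0' : 0 < eps by rewrite divr_gt0.
pose lam := Num.min (ma / 2) (1 / 2).
have lam0 : 0 < lam by rewrite lt_min; apply/andP; split; lra.
have lam2 : lam <= 1 / 2 by rewrite ge_min lexx orbT.
have lam3 : lam <= ma / 2 by rewrite ge_min lexx.
have lam1 : lam < 1 by lra.
exists Q', eps, lam; split => //; split; first by rewrite lam0.
move=> y hy.
have mS : measurable [set w | nrmQ Q' y w < eps].
  by apply: meas_lt; [exact: nrmQ_meas|exact: measurable_cst].
have hfull i : {ae P, forall w, A i w -> nrmQ Q' y w < eps}.
  apply: (@atom_full _ _ _ P (A i) _ lam (hA i) mS hy).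
  rewrite (ha i).1 lee_fin; apply: le_trans lam3 _.
  by apply: le_trans (hma i); have := (ha i).2.1; lra.
rewrite /=.
have -> : f (x + y) = f x \+ (fun w => f (x + y) w - f x w).
  by apply/funext => w /=; rewrite [_ + (_ - _)]addrC subrK.
apply: hGy; first exact: kmeasB.
have hall : {ae P, forall w, forall i, (A i w -> c i <= eps0 w) /\ (A i w -> xi i w <= k i)
   /\ 0 <= xi i w /\ (A i w -> nrmQ Q' y w < eps)}.
  apply: ae_forall_ord => i.
  apply: ae_and; first exact: (hc i).2.
  apply: ae_and; first exact: (hk i).2.
  apply: ae_and; [exact: (hxi i).2|exact: hfull].
have hadd := @hom_add _ _ f x y hf.
have hby := hb y.
have H := ae_and hall (ae_and hadd (ae_and hby eps0pos)).
rewrite /ae_le; apply: filterS H => w [hall' [hadd' [hby' heps0]]].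
rewrite hadd' addrAC subrr add0r; apply: le_trans hby' _.
case: (pselect (exists j, A j w)) => [[j Aj]|nA]; last first.
  rewrite big1 ?ltW // => i _; rewrite indicE memNset ?mul0r //.
  by move=> Ai; apply: nA; exists i.
apply: (@le_trans _ _ (\sum_(i < n) (Kb * eps))).
  apply: ler_sum => i _; have [h1 [h2 [h3 h4]]] := hall' i.
  case: (pselect (A i w)) => Ai; last first.
    by rewrite indicE memNset ?mul0r //; apply: mulr_ge0 => //; exact: ltW.
  rewrite indicE mem_set // mul1r; apply: ler_pM => //; first exact: nrmQ_ge0.
    exact: le_trans (h2 Ai) (hKb i).
  apply: ltW; apply: le_lt_trans (h4 Ai); apply: nrmQ_le_in => j'; exact: hQ'.
rewrite sumr_const card_ord.
have e1 : Kb * eps *+ n = (m * (n%:R * Kb)) / (n%:R * Kb + 1).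
  by rewrite -mulr_natr /eps; field; exact: lt0r_neq0.
apply: (le_trans _ (le_trans (hm j) ((hall' j).1 Aj))).
rewrite e1 ler_pdivrMr //; nra.
Qed.



Lemma cont_bound (f : E -> T -> K) : essentially_purely_atomic P ->
  L0_module_hom (rlc_mod M) f -> in_dual_min M f ->
  (exists (n : nat) (A : 'I_n -> set T) (xi : 'I_n -> T -> R)
          (Q : 'I_n -> seq (rlc_idx M)),
       (forall i, P_atom P (A i)) /\
       (forall i, measurable_fun setT (xi i) /\ ae_le P (fun _ => 0) (xi i)) /\
       forall x, ae_le P (fun w => kabs (f x w))
         (fun w => \sum_(i < n) \1_(A i) w * xi i w * nrmQ (Q i) x w)).
Proof.
move=> [S [A [hatom [_ [hcov _]]]]] hf hin.
have [kmf _] := hf.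
pose G : set (T -> K) :=
  [set g | exists c : R, c < 1 /\ ae_le P (fun w => kabs (g w)) (fun _ => c)].
have hG : Tc_open P kabs kmeas G.
  move=> g kg [c [c1 hc]]; exists (fun _ => (1 - c) / 2); split; first exact: measurable_cst.
  split; first by apply: aeW => _; rewrite divr_gt0 // subr_gt0.
  move=> y ky hy; exists ((1 + c) / 2); split; first lra.
  rewrite /ae_le in hc hy *; have hh := ae_and hc hy.
  move: hh; apply: filterS => w [h1 h2] /=.
  apply: le_trans (kabsD _ _) _; lra.
have G0 : G (f 0).
  by exists 0; split => //; apply: filterS (@hom0 _ _ f hf) => w /= ->; rewrite kabs0.
have [Q [eps [lam [eps0 [/andP [lam0 lam1] H]]]]] := hin G hG 0 G0.
have [N0 hN0] := @union_large _ _ _ P S A lam (fun n Sn => (hatom n Sn).1) hcov lam0.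
pose U := \bigcup_(k in [set k | S k /\ (k < N0)%N]) A k.
have mU : measurable U by apply: bigcup_measurable => k [Sk _]; exact: (hatom k Sk).1.
have [w0 _] : exists w : T, True.
  apply: contrapT => hn.
  have hT : [set: T] = set0.
    by apply/seteqP; split => w // _; apply: hn; exists w.
  have := probability_setT P; rewrite hT measure0.
  by case=> /eqP; rewrite eq_sym oner_eq0.
have [s0 Ss0 _] : (\bigcup_(n in S) A n) w0 by rewrite hcov.
pose A' (i : 'I_N0) := if pselect (S i) is left _ then A i else A s0.
have hA' (i : 'I_N0) : S i -> A' i = A i by rewrite /A'; case: pselect.
exists N0, A', (fun _ _ => 2 / eps), (fun _ => Q); split.
  by move=> i; rewrite /A'; case: pselect => [Si|_]; exact: hatom.
split.
  move=> i; split; first exact: measurable_cst.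
  by apply: aeW => _; rewrite divr_ge0 // ltW.
move=> x.
pose Nx := nrmQ Q x.
pose g w := if (0 < (\1_U w : R)) && (0 < Nx w) then (eps / 2) / Nx w else 2 / kabs (f x w).
have mg : measurable_fun setT g.
  apply: measurable_fun_ifT.
  - apply: measurable_and; apply: measurable_fun_ltr.
    + exact: measurable_cst.
    + exact: measurable_indic.
    + exact: measurable_cst.
    + exact: nrmQ_meas.
  - apply: measurable_funM; first exact: measurable_cst.
    exact: (measurableT_comp (meas_inv R) (nrmQ_meas Q x)).
  - apply: measurable_funM; first exact: measurable_cst.
    exact: (measurableT_comp (meas_inv R) (kmeas_abs _ (kmf x))).
pose y := scale (rlc_mod M) (fun w => ofR (g w)) x.
have h1 := nrmQ_scale Q x _ mg.
have h2 := @hom_scale _ _ f x g hf mg.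
have hP : ((1 - lam)%:E < P [set w | (nrmQ Q y w < eps)%R])%E.
  apply: lt_le_trans hN0 _.
  apply: (@ae_subset_le _ _ _ P U); first exact: mU.
    by apply: meas_lt; [exact: nrmQ_meas|exact: measurable_cst].
  apply: filterS h1 => w hw Uw /=; rewrite hw /g.
  have NxP := nrmQ_ge0 Q x w.
  case: (ltrP 0 (Nx w)) => hN.
    rewrite indicE mem_set // ltr01 /=.
    rewrite ger0_norm; last by apply: divr_ge0; [apply: divr_ge0; [exact: ltW|]|exact: ltW].
    rewrite /Nx mulfVK; [lra|exact: lt0r_neq0].
  have -> : nrmQ Q x w = 0 by apply/eqP; rewrite eq_le hN NxP.
  by rewrite mulr0.
have [c [c1 hc]] := H y hP.
rewrite add0r in hc.
rewrite /ae_le in hc *.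
have hh := ae_and hc h2.
apply: filterS hh => w [hcw h2w] /=.
have RHS0 : 0 <= \sum_(i < N0) \1_(A' i) w * (2 / eps) * nrmQ Q x w.
  apply: sumr_ge0 => i _; apply: mulr_ge0; last exact: nrmQ_ge0.
  by apply: mulr_ge0; [rewrite indicE ler0n|rewrite divr_ge0 // ltW].
have fx0 := kabs_ge0 (f x w).
rewrite h2w in hcw; move: hcw; rewrite /g; case: ifP => [/andP [hU hN]|_] hcw.
  rewrite ger0_norm in hcw; last first.
    by apply: divr_ge0; [apply: divr_ge0; [exact: ltW|]|exact: ltW].
  have hlt : eps / 2 / Nx w * kabs (f x w) < 1 by apply: le_lt_trans hcw c1.
  have key : kabs (f x w) <= 2 / eps * Nx w.
    move: hlt; rewrite mulrAC ltr_pdivrMr // mul1r => hlt.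
    rewrite mulrAC ler_pdivlMr //; nra.
  move: hU; rewrite indicE; case: (boolP (w \in U)) => [/set_mem hw|_]; last by rewrite ltxx.
  case: hw => j [Sj jN] Aj _.
  apply: le_trans key _.
  rewrite (bigD1 (Ordinal jN)) //= hA' // indicE mem_set // mul1r lerDl.
  apply: sumr_ge0 => i _; apply: mulr_ge0; last exact: nrmQ_ge0.
  by apply: mulr_ge0; [rewrite indicE ler0n|rewrite divr_ge0 // ltW].
have [z0|zn0] := eqVneq (kabs (f x w)) 0; first by rewrite z0.
exfalso; move: hcw; rewrite ger0_norm ?divfK //; last by rewrite divr_ge0.
by move=> h; have := le_lt_trans h c1; lra.
Qed.
End Mod.
End Generic.

Section Inst.
Context (d : measure_display) (T : measurableType d) (R : realType).

Lemma CabsE (z : R[i]) : Cabs_K z = Normc.normc z.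
Proof. by case: z. Qed.

Lemma CmeasB (f g : T -> R[i]) : Cmeas_K f -> Cmeas_K g ->
  Cmeas_K (fun w => f w - g w).
Proof.
move=> [f1 f2] [g1 g2]; split.
  rewrite (_ : (fun w => complex.Re (f w - g w)) = (fun w => complex.Re (f w) - complex.Re (g w))).
    exact: measurable_funB.
  by apply/funext => w; case: (f w) => a b; case: (g w).
rewrite (_ : (fun w => complex.Im (f w - g w)) = (fun w => complex.Im (f w) - complex.Im (g w))).
  exact: measurable_funB.
by apply/funext => w; case: (f w) => a b; case: (g w).
Qed.

Lemma CmeasR (g : T -> R) : measurable_fun setT g -> Cmeas_K (fun w => (g w)%:C%C).
Proof. by move=> mg; split => //=; exact: measurable_cst. Qed.

Lemma Cmeas_abs (h : T -> R[i]) : Cmeas_K h -> measurable_fun setT (fun w => Cabs_K (h w)).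
Proof.
move=> [h1 h2]; apply: (measurableT_comp (continuous_measurable_fun (@sqrt_continuous R))).
by apply: measurable_funD; apply: measurable_funX.
Qed.

Lemma CabsM (r : R) (a : R[i]) : Cabs_K (r%:C%C * a) = `|r| * Cabs_K a.
Proof.
rewrite !CabsE Normc.normcM; congr (_ * _).
by rewrite /Normc.normc /= expr0n /= addr0 sqrtr_sqr.
Qed.

End Inst.

Theorem lemma3p7 (d : measure_display) (T : measurableType d) (R : realType)
  (P : probability T R) :
  (* K = R *)
  lemma3p7_stmt P (K := R) (@Rabs_K R) (@Rmeas_K d T R) /\
  (* K = C *)
  lemma3p7_stmt P (K := R[i]) (@Cabs_K R) (@Cmeas_K d T R).
Proof.
split.
- move=> hat E M f hf; split.
  + apply: (@cont_bound _ _ _ P R (@Rabs_K R) (@Rmeas_K d T R) id) => //.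
    * by move=> a b; exact: ler_normD.
    * by move=> r a; exact: normrM.
    * by rewrite /Rabs_K normr0.
    * by rewrite /Rabs_K normr1.
    * by move=> a; exact: normr_ge0.
    * by move=> h mh; exact: (measurableT_comp (@normr_measurable R setT) mh).
  + apply: (@bound_cont _ _ _ P R (@Rabs_K R) (@Rmeas_K d T R)) => //.
    by move=> g h; apply: measurable_funB.
- move=> hat E M f hf; split.
  + apply: (@cont_bound _ _ _ P R[i] (@Cabs_K R) (@Cmeas_K d T R) (fun r => r%:C%C)) => //.
    * by move=> a b; rewrite !CabsE; exact: le_normcD.
    * exact: CabsM.
    * by rewrite CabsE Normc.normc0.
    * by rewrite CabsE Normc.normc1.
    * by move=> a; rewrite CabsE /Normc.normc; case: a => a b; exact: sqrtr_ge0.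
    * by move=> h mh; exact: (@Cmeas_abs d T R h mh).
  + apply: (@bound_cont _ _ _ P R[i] (@Cabs_K R) (@Cmeas_K d T R)) => //.
    by move=> g h; exact: (@CmeasB d T R g h).
Qed.
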